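(* Let $p$ be a prime, $P$ a finite $p$-group, $X$ a set in bijection with $P$, and $G$ the symmetric group on $X$. Regard $P$ as a subgroup of $G$ via the Cayley embedding (the regular permutation representation of $P$ on $X\cong P$). Then the image of ${\rm Res}^G_P\colon H^*(G)\to H^*(P)$ is contained in $I(P,{\cal C}_u)$.
   Context: $H^*(\cdot)$ denotes group cohomology with coefficients in ${\bf F}_p$ (trivial action). ${\cal C}_u={\cal C}_u(P)$ is the category whose objects are the subgroups of $P$ and whose morphisms are all injective group homomorphisms between them. $I(P,{\cal C}_u)$ is the subring of $H^*(P)$ consisting of those $x$ such that for every injective homomorphism $\phi\colon Q\to Q'$ between subgroups of $P$, $\phi^*({\rm Res}^P_{Q'}x)={\rm Res}^P_Q x$ (equivalently, the limit of $H^*$ over ${\cal C}_u$). *)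

(* Defs.v *)
From HB Require Import structures.
From mathcomp Require Import all_boot all_order all_algebra all_fingroup all_solvable.
Set Implicit Arguments. Unset Strict Implicit. Unset Printing Implicit Defensive.
Import GRing.Theory.
Local Open Scope ring_scope.

(* Group cohomology H^n(H; R) with trivial coefficients, via the standard
   (inhomogeneous) cochain complex.  An n-cochain on a group H is a function
   f : seq gT -> R, only its values on sequences of length n with entries in H
   matter. *)

Section Cochains.
Variables (gT : finGroupType) (R : comNzRingType).

(* [g_1; ..; g_i g_{i+1}; ..; g_{m}] (0-based i) *)
Definition merge_at (s : seq gT) (i : nat) : seq gT :=
  take i s ++ ((nth 1%g s i * nth 1%g s i.+1)%g :: drop i.+2 s).

(* (d f)(g_1,..,g_{n+1}) = f(g_2,..,g_{n+1})
     + sum_{i=1}^n (-1)^i f(g_1,..,g_i g_{i+1},..,g_{n+1})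
     + (-1)^{n+1} f(g_1,..,g_n) *)
Definition cobound (n : nat) (f : seq gT -> R) (s : seq gT) : R :=
  f (behead s)
  + \sum_(i < n) (-1) ^+ i.+1 * f (merge_at s i)
  + (-1) ^+ n.+1 * f (take n s).

Definition tuple_in (H : {set gT}) (n : nat) (s : seq gT) : Prop :=
  size s = n /\ all (fun g => g \in H) s.

Definition cocycle (H : {set gT}) (n : nat) (f : seq gT -> R) : Prop :=
  forall s, tuple_in H n.+1 s -> cobound n f s = 0.

Definition coboundary_on (H : {set gT}) (n : nat) (f : seq gT -> R) : Prop :=
  match n with
  | 0 => forall s, tuple_in H 0 s -> f s = 0
  | m.+1 => exists c : seq gT -> R,
      forall s, tuple_in H m.+1 s -> f s = cobound m c s
  end.

Definition cohomologous (H : {set gT}) (n : nat) (f g : seq gT -> R) : Prop :=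
  coboundary_on H n (fun s => f s - g s).

End Cochains.

Definition pullback (aT rT : finGroupType) (R : Type) (phi : aT -> rT)
  (f : seq rT -> R) : seq aT -> R := fun s => f (map phi s).

(* Cayley embedding of gT into the symmetric group on (the underlying set of) gT,
   via the (right) regular action x |-> x * a. *)
Definition cayley (gT : finGroupType) : gT -> {perm gT} :=
  actperm ('R%act : action [set: gT] gT).

(* Main.v *)
Require Import Defs.
From HB Require Import structures.
From mathcomp Require Import all_boot all_order all_algebra all_fingroup all_solvable.
From mathcomp Require Import pgroup.
Local Open Scope group_scope.
Import GRing.Theory.
Lemma cayleyE (gT : finGroupType) (a y : gT) : cayley a y = y * a.
Proof. by rewrite /cayley actpermE. Qed.

Section Conj.
Variables (gT : finGroupType) (Q : {group gT}) (phi : {morphism Q >-> gT}).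
Hypothesis phi_inj : 'injm phi.
Let K := phi @* Q.

Let rep (H : {set gT}) y := repr (y *: H).

Lemma rep_in (H : {group gT}) y : (rep H y)^-1 * y \in H.
Proof.
have : rep H y \in y *: H by apply: mem_repr (lcoset_refl _ _).
rewrite mem_lcoset => h.
have -> : (rep H y)^-1 * y = (y^-1 * rep H y)^-1 by rewrite invMg invgK.
by rewrite groupV.
Qed.

Lemma rep_mul (H : {group gT}) y x : x \in H -> rep H (y * x) = rep H y.
Proof. by move=> xH; rewrite /rep lcosetM lcoset_id. Qed.

Lemma rep_id (H : {group gT}) y : rep H (rep H y) = rep H y.
Proof.
have : rep H y \in y *: H by apply: mem_repr (lcoset_refl _ _).
by move/lcoset_eqP => e; rewrite /rep e.
Qed.

Lemma card_rep (H : {group gT}) : (#|rep H @: [set: gT]| * #|H|)%N = #|gT|.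
Proof.
have -> : rep H @: [set: gT] = repr @: lcosets H [set: gT].
  by rewrite /lcosets -imset_comp; apply: eq_imset => x; rewrite /= lcosetE.
have inj : {in lcosets H [set: gT] &, injective (@repr gT)}.
  move=> C1 C2 /imsetP[x1 _ ->] /imsetP[x2 _ ->]; rewrite !lcosetE => e.
  have h1 : repr (x1 *: H) \in x1 *: H by apply: mem_repr (lcoset_refl _ _).
  have h2 : repr (x2 *: H) \in x2 *: H by apply: mem_repr (lcoset_refl _ _).
  by rewrite -(lcoset_eqP h1) -(lcoset_eqP h2) e.
rewrite (card_in_imset inj).
by rewrite card_lcosets mulnC Lagrange ?subsetT // cardsT.
Qed.

Lemma exists_conj : exists s : {perm gT},
  forall x, x \in Q -> cayley (phi x) = cayley x ^ s.
Proof.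
set R := rep Q @: [set: gT]; set RK := rep K @: [set: gT].
have cardR : #|R| = #|RK|.
  have := card_rep Q; rewrite -(card_rep [group of K]) /= card_injm //.
  by move/eqP; rewrite eqn_pmul2r ?cardG_gt0 // => /eqP.
pose g r := nth 1 (enum RK) (index r (enum R)).
pose f y := g (rep Q y) * phi ((rep Q y)^-1 * y).
have fM y x : x \in Q -> f (y * x) = f y * phi x.
  move=> xQ; rewrite /f rep_mul // mulgA morphM ?mulgA //; exact: rep_in.
have f_inj : injective f.
  move=> y1 y2; rewrite /f.
  have gK r : r \in R -> g r \in RK.
    move=> rR; rewrite -mem_enum /g mem_nth // -cardE -cardR cardE index_mem mem_enum //.
  have gR y : rep Q y \in R by apply: imset_f; rewrite inE.
  have RKid u : u \in RK -> rep K u = u.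
    by case/imsetP=> w _ ->; rewrite rep_id.
  have k1 : phi ((rep Q y1)^-1 * y1) \in K by apply: mem_morphim; [exact: rep_in | exact: rep_in].
  have k2 : phi ((rep Q y2)^-1 * y2) \in K by apply: mem_morphim; [exact: rep_in | exact: rep_in].
  move=> e.
  have eg : g (rep Q y1) = g (rep Q y2).
    rewrite -(RKid _ (gK _ (gR y1))) -(RKid _ (gK _ (gR y2))) /rep.
    congr repr; apply/lcoset_eqP; apply/lcosetP.
    exists (phi ((rep Q y2)^-1 * y2) * (phi ((rep Q y1)^-1 * y1))^-1).
      by rewrite groupM ?groupV.
    by rewrite mulgA -e mulgK.
  have er : rep Q y1 = rep Q y2.
    move: eg; rewrite /g => /eqP; rewrite nth_uniq ?enum_uniq //; last 2 first.
    - by rewrite -cardE -cardR cardE index_mem mem_enum.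
    - by rewrite -cardE -cardR cardE index_mem mem_enum.
    move/eqP=> ei; rewrite -(nth_index 1 (s:=enum R) (x:=rep Q y1)) ?mem_enum // ei nth_index //.
    by rewrite mem_enum.
  move: e; rewrite eg er => /mulgI /(injmP phi_inj); rewrite -er.
  move=> h; apply: (mulgI (rep Q y1)^-1); apply: h; first exact: (rep_in Q y1).
  by rewrite {1}er; exact: (rep_in Q y2).
exists (perm f_inj) => x xQ.
apply/permP => y; rewrite conjgE !permM !cayleyE [in RHS]permE.
by rewrite fM // -[f _](permE f_inj) permKV.
Qed.
End Conj.
Arguments exists_conj {gT Q phi}.

Section Homot.
Variables (G : finGroupType) (R : comNzRingType).
Local Open Scope ring_scope.

Definition rm (i : nat) (s : seq G) := take i s ++ drop i.+1 s.
Definition prism (T : G) (i : nat) (y : seq G) :=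
  take i.+1 y ++ map (fun a => (a * T)%g) (drop i y).
Definition del (F : seq G -> R) (y : seq G) : R :=
  \sum_(j < size y) (-1) ^+ j * F (rm j y).
Definition hom (T : G) (F : seq G -> R) (y : seq G) : R :=
  \sum_(i < size y) (-1) ^+ i * F (prism T i y).

Lemma del_cons F x s : del F (x :: s) = F s - del (fun t => F (x :: t)) s.
Proof.
rewrite /del big_ord_recl /= expr0 mul1r /rm /= drop0; congr (_ + _).
rewrite -sumrN; apply: eq_bigr => j _; by rewrite exprS mulN1r mulNr.
Qed.

Lemma hom_cons T F x s :
  hom T F (x :: s) = F (x :: (x * T)%g :: map (fun a => (a * T)%g) s)
                     - hom T (fun t => F (x :: t)) s.
Proof.
rewrite /hom big_ord_recl /= expr0 mul1r /prism /= take0; congr (_ + _).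
rewrite -sumrN; apply: eq_bigr => j _; by rewrite exprS mulN1r mulNr.
Qed.

Lemma del_ext F1 F2 y : (forall t, F1 t = F2 t) -> del F1 y = del F2 y.
Proof. by move=> e; apply: eq_bigr => j _; rewrite e. Qed.
Lemma hom_ext T F1 F2 y : (forall t, F1 t = F2 t) -> hom T F1 y = hom T F2 y.
Proof. by move=> e; apply: eq_bigr => j _; rewrite e. Qed.
Lemma delB F1 F2 y : del (fun t => F1 t - F2 t) y = del F1 y - del F2 y.
Proof. by rewrite /del -sumrB; apply: eq_bigr => j _; rewrite mulrBr. Qed.
Lemma homB T F1 F2 y : hom T (fun t => F1 t - F2 t) y = hom T F1 y - hom T F2 y.
Proof. by rewrite /hom -sumrB; apply: eq_bigr => j _; rewrite mulrBr. Qed.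

Lemma rm_map (f : G -> G) j s : map f (rm j s) = rm j (map f s).
Proof. by rewrite /rm map_cat map_take map_drop. Qed.

Lemma del_map (f : G -> G) F s : del (fun t => F (map f t)) s = del F (map f s).
Proof.
rewrite /del size_map; apply: eq_bigr => j _; by rewrite rm_map.
Qed.

Lemma zmod_aux (V : zmodType) (a k d f0 f1 f2 h f3 : V) :
  d + h = f2 - f0 -> f3 = f1 - (f2 - k) ->
  (a - (k - d)) + (f3 - (a - h)) = f1 - f0.
Proof.
move=> e ->.
have -> : f0 = f2 - (d + h) by rewrite e opprB addrC subrK.
rewrite !opprB ?opprD ?opprK.
rewrite [LHS]addrC -!addrA; congr (_ + _).
by rewrite addKr addrC -!addrA addNr addr0 addrC [h + d]addrC addrA.
Qed.

Lemma homotopy T F y :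
  del (hom T F) y + hom T (del F) y = F (map (fun a => (a * T)%g) y) - F y.
Proof.
elim: y F => [|x s IH] F; first by rewrite /del /hom !big_ord0 addr0 subrr.
set F' := fun t => F (x :: t).
set K := fun t => F (x :: (x * T)%g :: map (fun a => (a * T)%g) t).
rewrite del_cons (del_ext _ _ _ (hom_cons T F x)) delB.
rewrite hom_cons (hom_ext _ _ _ _ (del_cons F x)) homB.
rewrite /=.
apply: zmod_aux; first exact: (IH F').
by rewrite del_cons (del_cons (fun t => F (x :: t))) -(del_map (fun a => (a * T)%g)).
Qed.

Definition mG (a b : G) := (a * b)%g.
Definition dg (a b : G) := (a^-1 * b)%g.
Definition D (y : seq G) := pairmap dg (head 1%g y) (behead y).
Definition P (t : seq G) := 1%g :: scanl mG 1%g t.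

Lemma scanl_D x t : pairmap dg x (scanl mG x t) = t.
Proof. by elim: t x => //= a t IH x; rewrite IH /dg mulKg. Qed.

Lemma D_P t : D (P t) = t.
Proof. exact: scanl_D. Qed.

Lemma scanl_mull u x s :
  scanl mG (u * x)%g s
  = map (mG u) (scanl mG x s).
Proof. by elim: s x => //= a s IH x; rewrite /mG -mulgA -/(mG u (mG x a)) -/(mG x a) IH. Qed.

Lemma D_scanl x s : scanl mG x (pairmap dg x s) = s.
Proof.
elim: s x => //= a s IH x.
have -> : mG x (dg x a) = a by rewrite /mG /dg mulKVg.
by rewrite IH.
Qed.

Lemma P_D y0 ys : P (D (y0 :: ys)) = map (fun a => (y0^-1 * a)%g) (y0 :: ys).
Proof.
rewrite /P /D /= mulVg; congr (_ :: _).
by rewrite -(mulVg y0) scanl_mull D_scanl.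
Qed.

Lemma D_mull u y : D (map (mG u) y) = D y.
Proof.
case: y => //= y0 ys; rewrite /D /=.
by elim: ys y0 => //= a s IH x; rewrite IH /dg invMg -mulgA mulKg.
Qed.

Lemma D_mulr T y : D (map (fun a => (a * T)%g) y) = map (fun a => (a ^ T)%g) (D y).
Proof.
case: y => //= y0 ys; rewrite /D /=.
by elim: ys y0 => //= a s IH x; rewrite IH /dg conjgE invMg !mulgA.
Qed.

Lemma prism_mull T u i y :
  prism T i (map (mG u) y) = map (mG u) (prism T i y).
Proof.
rewrite /prism map_cat map_take map_drop -!map_comp; congr (_ ++ _).
by rewrite -map_drop; apply: eq_map => a /=; rewrite /mG mulgA.
Qed.

Lemma hom_inv T (z : seq G -> R) u y :
  hom T (fun t => z (D t)) (map (mG u) y) = hom T (fun t => z (D t)) y.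
Proof.
rewrite /hom size_map; apply: eq_bigr => i _; by rewrite prism_mull D_mull.
Qed.

Lemma hom_PD T (z : seq G -> R) (y : seq G) : (size y > 0)%N ->
  hom T (fun t => z (D t)) y = hom T (fun t => z (D t)) (P (D y)).
Proof. by case: y => // y0 ys _; rewrite P_D hom_inv. Qed.

Lemma pairmap_rm i x ys : (i.+1 < size ys)%N ->
  pairmap dg x (rm i ys) = merge_at (pairmap dg x ys) i.
Proof.
elim: i x ys => [|i IH] x [|y1 ys] //=.
  case: ys => [|y2 t] //= _.
  by rewrite /rm /merge_at /= drop0 /dg mulgA mulgK.
move=> h; rewrite -/(rm i ys) IH //.
Qed.

Lemma pairmap_take k x ys : pairmap dg x (take k ys) = take k (pairmap dg x ys).
Proof. by elim: ys x k => [|a s IH] x [|k] //=; rewrite IH. Qed.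

Lemma del_ext_in F1 F2 y : (forall j, (j < size y)%N -> F1 (rm j y) = F2 (rm j y)) ->
  del F1 y = del F2 y.
Proof. by move=> e; apply: eq_bigr => j _; rewrite e. Qed.

Lemma del_D (f : seq G -> R) m y : size y = m.+2 ->
  del (fun t => f (D t)) y = cobound m f (D y).
Proof.
case: y => // y0 ys [sz]; rewrite /del /= sz big_ord_recl big_ord_recr /=.
rewrite /cobound expr0 mul1r addrA; congr (_ + _ + _).
- by case: ys sz => // y1 ys _; rewrite /rm /D /= drop0.
- apply: eq_bigr => i _; rewrite /D /= /bump /= add1n /rm /=.
  by rewrite -/(rm i ys) pairmap_rm // sz ltnS.
- rewrite /D /= /rm /= drop_oversize ?sz // cats0 pairmap_take.
  by rewrite /bump /= add1n.
Qed.
End Homot.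
Arguments rm {G}. Arguments prism {G}. Arguments del {G R}. Arguments hom {G R}.
Arguments mG {G}. Arguments dg {G}. Arguments D {G}. Arguments P {G}.
Arguments homotopy {G R}. Arguments del_D {G R}. Arguments del_ext_in {G R}.
Arguments hom_PD {G R}. Arguments D_mulr {G}. Arguments D_P {G}.


Lemma cayleyM (gT : finGroupType) (a b : gT) : cayley (a * b) = cayley a * cayley b.
Proof. by apply/permP => y; rewrite permM !cayleyE mulgA. Qed.

Section Sizes.
Variable G : finGroupType.
Lemma size_D (y : seq G) : size (D y) = (size y).-1.
Proof. by rewrite /D size_pairmap size_behead. Qed.
Lemma size_rm j (y : seq G) : j < size y -> size (rm j y) = (size y).-1.
Proof.
rewrite /rm size_cat size_take size_drop => lt; rewrite lt.
move: lt; case: (size y) => // n; rewrite ltnS => h.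
by rewrite subSS subnKC.
Qed.
Lemma size_prism T i (y : seq G) : i < size y -> size (prism T i y) = (size y).+1.
Proof.
move=> lt; rewrite /prism size_cat size_takel // size_map size_drop.
by rewrite addSn subnKC // ltnW.
Qed.
End Sizes.

Lemma pull_cobound (gT : finGroupType) (R : comNzRingType) (m : nat)
  (c : seq {perm gT} -> R) (s : seq gT) : size s = m.+1 ->
  cobound m c (map (@cayley gT) s) = cobound m (fun u => c (map (@cayley gT) u)) s.
Proof.
move=> sz; rewrite /cobound behead_map map_take; congr (_ + _ + _)%R.
apply: eq_bigr => i _; congr (_ * c _)%R.
rewrite /merge_at map_cat map_take /= map_drop cayleyM.
by rewrite !(nth_map 1) // sz ?ltnS ?ltn_ord // ltnW.
Qed.

Theorem theorem3 (p : nat) (gT : finGroupType) (p_pr : prime p)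
  (pP : (p.-group [set: gT])%g)
  (n : nat) (z : seq {perm gT} -> 'F_p)
  (z_cocycle : cocycle [set: {perm gT}] n z)
  (Q Q' : {group gT}) (phi : {morphism Q >-> gT})
  (phi_inj : 'injm phi) (phi_into : phi @* Q \subset Q') :
  cohomologous Q n (pullback (fun x => cayley (phi x)) z) (pullback (@cayley gT) z).
Proof.
case: n z z_cocycle => [|m] z zc.
  by move=> s [/size0nil -> _]; rewrite /pullback /= GRing.subrr.
have [sg Hsg] := exists_conj phi_inj.
pose Z := fun t : seq {perm gT} => z (D t).
pose c' := fun t => hom sg Z (P t).
exists (fun s => c' (map (@cayley gT) s)).
move=> s [sz allQ].
set t := map (@cayley gT) s.
have szt : size t = m.+1 by rewrite size_map.
have szb : size (P t) = m.+2 by rewrite /P /= size_scanl szt.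
have key := homotopy sg Z (P t).
have h0 : hom sg (del Z) (P t) = 0%R.
  rewrite /hom big1 // => i _.
  rewrite (del_D z (m.+1)) ?size_prism // ?szb //.
  rewrite zc ?GRing.mulr0 //; split.
    by rewrite size_D size_prism // szb.
  by apply/allP => u _; rewrite inE.
have h1 : del (hom sg Z) (P t) = cobound m c' t.
  rewrite (del_ext_in _ (fun u => c' (D u))); last first.
    move=> j lt; rewrite /c' hom_PD // size_rm // szb //.
  by rewrite (del_D c' m) // D_P.
rewrite h0 GRing.addr0 h1 in key.
rewrite -pull_cobound // key /Z D_mulr D_P /pullback.
congr (z _ - _)%R; rewrite /t -map_comp; apply/eq_in_map => x xs.
by rewrite /= Hsg // (allP allQ).
Qed.
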